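(* For any infinite cardinality $\kappa$, $\Delta_{c_0(\kappa)}^{(c)}(R)=2R$ for all $R\in[0,\infty)$.
   Context: For a cardinal $\kappa$, $c_0(\kappa)$ is the space of real families $(x_\xi)_{\xi<\kappa}$ such that $\{\xi: |x_\xi|>\eta\}$ is finite for every $\eta>0$, with the sup norm. For a metric space $X$ and a cover $\mathcal{U}$ of $X$: $\mathrm{diam}(\mathcal{U})=\sup_{U\in\mathcal{U}}\mathrm{diam}(U)$; $\mathcal{L}(\mathcal{U})=\sup\{d\in[0,\infty): \text{every } E\subseteq X \text{ with } \mathrm{diam}(E)<d \text{ is contained in some } U\in\mathcal{U}\}$; $\mathcal{U}$ is point-finite if each point lies in only finitely many members. $\Delta_X^{(c)}(R)=\inf\{\mathrm{diam}(\mathcal{U}): \mathcal{U} \text{ a point-finite cover of } X,\ \mathcal{L}(\mathcal{U})\geq R\}$. *)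

(* Defs.v *)
From HB Require Import structures.
From mathcomp Require Import all_boot all_order all_algebra.
From mathcomp Require Import all_classical all_reals ereal.
Set Implicit Arguments. Unset Strict Implicit. Unset Printing Implicit Defensive.
Import Order.TTheory GRing.Theory Num.Theory.
Local Open Scope classical_set_scope.
Local Open Scope ring_scope.

Section C0.
Variables (R : realType) (K : Type).

Definition c0 : set (K -> R) :=
  [set x | forall eta : R, 0 < eta -> finite_set [set k | eta < `|x k|]].

Definition c0_dist (x y : K -> R) : \bar R :=
  ereal_sup [set (`|x k - y k|)%:E | k in [set: K]].

(* diameter of a subset; convention diam(empty) = 0 *)
Definition diam (E : set (K -> R)) : \bar R :=
  ereal_sup (0%:E |` [set c0_dist x y | x in E & y in E]).

Definition is_cover (U : set (set (K -> R))) : Prop :=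
  (forall A, U A -> A `<=` c0) /\
  (forall x, c0 x -> exists A, U A /\ A x).

Definition point_finite (U : set (set (K -> R))) : Prop :=
  forall x, c0 x -> finite_set [set A | U A /\ A x].

Definition cover_diam (U : set (set (K -> R))) : \bar R :=
  ereal_sup [set diam A | A in U].

Definition lebesgue_number (U : set (set (K -> R))) : \bar R :=
  ereal_sup [set d%:E | d in [set d : R | 0 <= d /\
     forall E, E `<=` c0 -> (diam E < d%:E)%E -> exists A, U A /\ E `<=` A]].

Definition Delta_c (r : R) : \bar R :=
  ereal_inf [set cover_diam U | U in
     [set U | is_cover U /\ point_finite U /\ (r%:E <= lebesgue_number U)%E]].

End C0.

(* Main.v *)
Require Import Defs.
From HB Require Import structures.
From mathcomp Require Import all_boot all_order all_algebra.
From mathcomp Require Import all_classical all_reals ereal.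
From mathcomp Require Import lra.
Import Order.TTheory GRing.Theory Num.Theory.
Local Open Scope classical_set_scope.
Local Open Scope ring_scope.

Section Aux.
Variables (R : realType) (K : Type).
Implicit Types (x y : K -> R) (E : set (K -> R)).

Lemma dist_ge x y k : ((`|x k - y k|)%:E <= c0_dist x y)%E.
Proof. by apply: ereal_sup_ubound; exists k. Qed.

Lemma diam_ge E x y : E x -> E y -> (c0_dist x y <= diam E)%E.
Proof. by move=> Ex Ey; apply: ereal_sup_ubound; right; exists x => //; exists y. Qed.

Lemma diam_ge0 E : (0 <= diam E)%E.
Proof. by apply: ereal_sup_ubound; left. Qed.

Lemma diam_le E (s : R) : 0 <= s ->
  (forall x y, E x -> E y -> forall k, `|x k - y k| <= s) -> (diam E <= s%:E)%E.
Proof.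
move=> s0 H; apply/ereal_supP => _ [->|[x Ex [y Ey <-]]]; first by rewrite lee_fin.
by apply/ereal_supP => _ [k _ <-]; rewrite lee_fin; apply: H.
Qed.

Lemma diam_coord E x y k : E x -> E y -> ((`|x k - y k|)%:E <= diam E)%E.
Proof. by move=> Ex Ey; apply: (le_trans (dist_ge x y k)); apply: diam_ge. Qed.

End Aux.


Lemma fin_funs (K' : eqType) (X : Type) (s : seq K') (T : K' -> set X) (d : X) :
  (forall k, finite_set (T k)) -> (forall k, k \notin s -> T k `<=` [set d]) ->
  finite_set [set p : K' -> X | forall k, T k (p k)].
Proof.
elim: s T => [|a s IH] T Tfin Td.
  apply: (@sub_finite_set _ _ [set (fun _ => d)]); last exact: finite_set1.
  move=> p /= Hp; apply: funext => k; have kn : k \notin [::] by rewrite in_nil.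
  exact: (Td k kn _ (Hp k)).
pose T' k := if k == a then [set d] else T k.
have P'fin : finite_set [set p : K' -> X | forall k, T' k (p k)].
  apply: IH.
    by move=> k; rewrite /T'; case: ifP => _; [exact: finite_set1|].
  move=> k kns; rewrite /T'; case: ifPn => [_|kna]; first by [].
  by apply: Td; rewrite in_cons negb_or kna.
apply: (@sub_finite_set _ _ (\bigcup_(v in T a)
   ((fun q => fun k => if k == a then v else q k) @` [set p : K' -> X | forall k, T' k (p k)]))).
  move=> p /= Hp; exists (p a) => //.
  exists (fun k => if k == a then d else p k).
    by move=> k; rewrite /T'; case: ifP.
  by apply: funext => k /=; case: (eqVneq k a) => [->|nka].
by apply: bigcup_finite => // v _; apply: finite_image.
Qed.


Section Lower.
Variables (R : realType) (K : Type).
Hypothesis hK : infinite_set [set: K].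

Definition ind (j : K) (c : R) : K -> R := fun i => if `[< i = j >] then c else 0.

Lemma ind_c0 j c : c0 (ind j c).
Proof.
move=> eta eta0; apply: (@sub_finite_set _ _ [set j]); last exact: finite_set1.
move=> k /=; rewrite /ind; case: (pselect (k = j)) => [//|nkj].
by rewrite asboolF // normr0 ltNge (ltW eta0).
Qed.

Lemma c0_zero : c0 (fun _ : K => (0:R)).
Proof.
move=> eta eta0; apply: (@sub_finite_set _ _ set0); last exact: finite_set0.
by move=> k /=; rewrite normr0 ltNge (ltW eta0).
Qed.

Lemma lower (U : set (set (K -> R))) (r s : R) : is_cover U -> point_finite U ->
  (r%:E <= lebesgue_number U)%E -> 0 < s -> s < r -> ((2*s)%:E <= cover_diam U)%E.
Proof.
move=> [Uc Ucov] Upf rL s0 sr.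
have Leb : forall E : set (K -> R), E `<=` @c0 R K -> (diam E <= s%:E)%E -> exists A, U A /\ E `<=` A.
  move=> E Ec dE.
  have : (s%:E < lebesgue_number U)%E by apply: lt_le_trans rL; rewrite lte_fin.
  case/ereal_sup_gt => _ [d [d0 Pd] <-]; rewrite lte_fin => sd.
  by apply: Pd => //; apply: le_lt_trans dE _; rewrite lte_fin.
pose B k := [set v : K -> R | c0 v /\ forall i, (i <> k -> 0 <= v i <= s) /\ (i = k -> -s <= v i <= 0)].
have Bd k : (diam (B k) <= s%:E)%E.
  apply: diam_le; first exact: ltW.
  move=> x y [_ Hx] [_ Hy] i; have [hx1 hx2] := Hx i; have [hy1 hy2] := Hy i.
  rewrite ler_norml; case: (pselect (i = k)) => ik.
    by move: (hx2 ik) (hy2 ik) => /andP[? ?] /andP[? ?]; apply/andP; split; lra.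
  by move: (hx1 ik) (hy1 ik) => /andP[? ?] /andP[? ?]; apply/andP; split; lra.
have : forall k, exists A, U A /\ B k `<=` A.
  by move=> k; apply: Leb => // v [].
move=> /choice [f Hf].
pose M := [set A | U A /\ A (fun _ => 0)].
have Mfin : finite_set M by apply: Upf; exact: c0_zero.
have fM k : M (f k).
  have [Uf Bf] := Hf k; split => //; apply: Bf; split; first exact: c0_zero.
  by move=> i; split => _; rewrite lexx ?oppr_le0 ltW.
have [k1 [k2 [nk fk]]] : exists k1 k2, k1 <> k2 /\ f k1 = f k2.
  apply: contrapT => H; apply: hK.
  have inj : {in f @^-1` M &, injective f}.
    by move=> a b _ _ fab; apply: contrapT => nab; apply: H; exists a, b.
  apply: (sub_finite_set _ (finite_preimage inj Mfin)) => k _; exact: fM k.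
have A1 : f k1 (ind k2 s).
  apply: (proj2 (Hf k1)); split; first exact: ind_c0.
  move=> i; rewrite /ind; split => hi.
    by case: (pselect (i = k2)) => h; [rewrite asboolT|rewrite asboolF]; rewrite //; apply/andP; split; lra.
  rewrite asboolF; first by apply/andP; split; lra.
  by move=> h; apply: nk; rewrite -hi -h.
have A2 : f k1 (ind k2 (-s)).
  rewrite fk; apply: (proj2 (Hf k2)); split; first exact: ind_c0.
  move=> i; rewrite /ind; split => hi; first by rewrite asboolF //; apply/andP; split; lra.
  by rewrite asboolT //; apply/andP; split; lra.
have cd : (diam (f k1) <= cover_diam U)%E.
  by apply: ereal_sup_ubound; exists (f k1) => //; exact: (proj1 (Hf k1)).
apply: le_trans cd; apply: (le_trans _ (@diam_coord _ _ _ _ _ k2 A1 A2)).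
by rewrite /ind asboolT // lee_fin opprK ger0_norm; lra.
Qed.

End Lower.


Section Upper.
Variables (R : realType) (K : Type) (r e : R).
Hypotheses (r0 : 0 <= r) (e0 : 0 < e).

Definition J (o : option (bool * nat)) (v : R) : Prop :=
  match o with
  | None => `|v| <= e + r
  | Some (b, n) => let y := if b then v else - v in
      e + n%:R * e <= y <= e + n%:R * e + 2 * r + e
  end.

Definition Amem (p : K -> option (bool * nat)) : set (K -> R) :=
  [set x | c0 x /\ forall k, J (p k) (x k)].

Definition Ucov : set (set (K -> R)) := range Amem.

Lemma Ucov_diam : (cover_diam Ucov <= (2 * r + 2 * e)%:E)%E.
Proof.
have r0' := r0; have e0' := e0.
apply/ereal_supP => _ [_ [p _ <-] <-]; apply: diam_le; first lra.
move=> x y [_ Hx] [_ Hy] k; move: (Hx k) (Hy k); rewrite /J.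
case: (p k) => [[b n]|].
  case: b => /andP[h1 h2] /andP[h3 h4]; rewrite ler_norml; apply/andP; split; lra.
rewrite !ler_norml => /andP[h1 h2] /andP[h3 h4]; apply/andP; split; lra.
Qed.

Lemma Ucov_leb (E : set (K -> R)) : E `<=` @c0 R K ->
  (forall x y, E x -> E y -> forall k, `|x k - y k| <= r) ->
  exists A, Ucov A /\ E `<=` A.
Proof.
move=> Ec Ed; have r0' := r0; have e0' := e0.
case: (pselect (exists x, E x)) => [[x0 Ex0]|nE]; last first.
  exists (Amem (fun _ => None)); split; first by exists (fun _ => None).
  by move=> x Ex; exfalso; apply: nE; exists x.
have : forall k, exists x, E x /\ (e + r < `|x k| \/ forall y, E y -> `|y k| <= e + r).
  move=> k; case: (pselect (exists x, E x /\ e + r < `|x k|)) => [[x [Ex h]]|nx].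
    by exists x; split => //; left.
  exists x0; split => //; right => y Ey; rewrite leNgt; apply/negP => h.
  by apply: nx; exists y.
move=> /choice [x1 Hx1].
pose p k := if e + r < `|x1 k k| then
   Some (0 < x1 k k, Num.Def.trunc ((`|x1 k k| - r - e) / e)) else None.
exists (Amem p); split; first by exists p.
move=> y Ey; split; first exact: Ec.
move=> k; have [Ex1 hx1] := Hx1 k; rewrite /p.
case: ifPn => hv; last first.
  case: hx1 => [h|h]; first by rewrite h in hv.
  exact: h.
rewrite /J.
have hd := Ed _ _ Ey Ex1 k; rewrite ler_norml in hd; case/andP: hd => hd1 hd2.
set q := (`|x1 k k| - r - e) / e.
have q0 : 0 <= q by rewrite /q divr_ge0 ?(ltW e0) //; lra.
have hn1 : (Num.Def.trunc q)%:R <= q by rewrite -truncn_ge_nat.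
have hn2 : q < (Num.Def.trunc q).+1%:R by rewrite -truncn_le_nat.
have hq : q * e = `|x1 k k| - r - e by rewrite /q mulfVK // gt_eqF.
have hn1' : (Num.Def.trunc q)%:R * e <= q * e by rewrite ler_pM2r.
have hn2' : q * e < (Num.Def.trunc q).+1%:R * e by rewrite ltr_pM2r.
rewrite -natr1 mulrDl mul1r in hn2'.
move: hn1' hn2'; set N := (Num.Def.trunc q)%:R => hn1' hn2'.
case: (ltrP 0 (x1 k k)) => v0 /=.
  rewrite gtr0_norm // in hq hv; apply/andP; split; lra.
have v0' : x1 k k < 0 by rewrite ler0_norm // in hv; lra.
rewrite ltr0_norm // in hq hv; apply/andP; split; lra.
Qed.

Lemma Ucov_pf : point_finite Ucov.
Proof.
move=> x cx; have r0' := r0; have e0' := e0.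
have Pfin : finite_set [set p : K -> option (bool * nat) | forall k, J (p k) (x k)].
  have [s Hs] : exists s : seq {classic K}, [set k : {classic K} | e / 2 < `|x k|] = [set` s].
    by apply/finite_seqP; apply: cx; lra.
  apply: (@fin_funs {classic K} _ s (fun k => [set o | J o (x k)]) None).
    move=> k.
    apply: (@sub_finite_set _ _ (None |` (Some @` ([set: bool] `*` `I_(Num.Def.trunc (`|x k| / e)).+1)))).
      case=> [[b n]|] /= h; last by left.
      right; exists (b, n) => //; split => //=.
      rewrite ltnS truncn_ge_nat ?divr_ge0 ?normr_ge0 ?(ltW e0) // ler_pdivlMr //.
      have := ler_norm (x k); have := ler_norm (- x k); rewrite normrN.
      move: h; case: b => /andP[h1 h2] ha hb; lra.
    rewrite finite_setU; split; first exact: finite_set1.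
    by apply: finite_image; apply: finite_setX; [exact: finite_finset | exact: finite_II].
  move=> k kns o; case: o => [[b n]|] //= h; exfalso.
  have hk : e / 2 < `|x k|.
    have := ler_norm (x k); have := ler_norm (- x k); rewrite normrN.
    move: h; case: b => /andP[h1 h2] ha hb.
      have : 0 <= n%:R * e by rewrite mulr_ge0 ?ler0n ?(ltW e0).
      lra.
    have : 0 <= n%:R * e by rewrite mulr_ge0 ?ler0n ?(ltW e0).
    lra.
  have : [set` s] k by rewrite -Hs.
  by move=> /= ks; move/negP: kns.
apply: (@sub_finite_set _ _ (Amem @` [set p : K -> option (bool * nat) | forall k, J (p k) (x k)])); last exact: finite_image.
by move=> A [[p _ <-] Ax]; exists p => //; exact: (proj2 Ax).
Qed.

End Upper.


Theorem corollary3p11 (R : realType) (K : Type) (hK : infinite_set [set: K]) :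
  forall r : R, 0 <= r -> Delta_c K r = (2 * r)%:E.
Proof.
move=> r r0; apply/le_anti/andP; split.
  apply/lee_addgt0Pr => eps eps0.
  pose e := eps / 2.
  have e0 : 0 < e by rewrite /e divr_gt0.
  have adm : is_cover (Ucov R K r e) /\ point_finite (Ucov R K r e) /\
             (r%:E <= lebesgue_number (Ucov R K r e))%E.
    split; [split|split].
    - by move=> A [p _ <-] x [].
    - move=> x cx.
      have sx : [set x] `<=` @c0 R K by move=> y ->.
      have dx : forall y z, [set x] y -> [set x] z -> forall k, `|y k - z k| <= r.
        by move=> y z -> -> k; rewrite subrr normr0.
      have [A [UA xA]] := @Ucov_leb R K r e r0 e0 [set x] sx dx.
      by exists A; split => //; apply: xA.
    - exact: (@Ucov_pf R K r e r0 e0).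
    - apply: ereal_sup_ubound; exists r => //; split => // E Ec dE.
      apply: (@Ucov_leb R K r e r0 e0 E Ec) => x y Ex Ey k.
      have := le_lt_trans (@diam_coord _ _ _ _ _ k Ex Ey) dE.
      by rewrite lte_fin => /ltW.
  have h1 : (Delta_c K r <= cover_diam (Ucov R K r e))%E.
    by apply: ereal_inf_lbound; exists (Ucov R K r e).
  apply: (le_trans h1); apply: (le_trans (@Ucov_diam R K r e r0 e0)).
  by rewrite -EFinD lee_fin /e; lra.
apply/ereal_infP => _ [U [cov [pf leb]] <-].
have cd0 : (0 <= cover_diam U)%E.
  have [A [UA _]] := proj2 cov _ (@c0_zero R K).
  apply: (le_trans (@diam_ge0 R K A)).
  by apply: ereal_sup_ubound; exists A.
have [->|rpos] := eqVneq r 0; first by rewrite mulr0.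
have rp : 0 < r by rewrite lt_neqAle eq_sym rpos.
have Hs : forall s, 0 < s -> s < r -> ((2 * s)%:E <= cover_diam U)%E.
  by move=> s s0 sr; apply: (@lower R K hK U r s cov pf leb s0 sr).
move: cd0 Hs; case: (cover_diam U) => [c| |] //; rewrite ?leey // lee_fin => c0' Hs.
rewrite lee_fin leNgt; apply/negP => hc.
have := Hs ((c / 2 + r) / 2) _ _; rewrite lee_fin; lra.
Qed.
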